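(* Let $I\subset\mathbb{B}[x^{\pm1}]$ be the zero-dimensional tropical ideal of degree $2$ corresponding to the sublattice $4\mathbb{Z}\subset\mathbb{Z}$, i.e. the tropical ideal whose polynomials of minimal support are the binomials $x^u\oplus x^v$ with $u\neq v$, $u-v\in4\mathbb{Z}$, and the trinomials $x^u\oplus x^v\oplus x^w$ with $u,v,w$ pairwise incongruent modulo $4$. Then there is no field $K$ of characteristic $2$ and ideal $J\subset K[x^{\pm1}]$ with $I=\operatorname{trop}(J)$.
   Context: $\mathbb{B}=\{\infty,0\}$ with $\oplus=\min$ and multiplication $+$. For a field $K$ and $F\in K[x_1^{\pm1},\dots,x_n^{\pm1}]$, $\operatorname{trop}(F)=\bigoplus_{\mathbf u\in\operatorname{supp}(F)}\mathbf x^{\mathbf u}\in\mathbb{B}[x_1^{\pm1},\dots,x_n^{\pm1}]$, and for an ideal $J$, $\operatorname{trop}(J)$ is the ideal generated by $\{\operatorname{trop}(F):F\in J\}$. A tropical ideal of the form $\operatorname{trop}(J)$ is realizable over $K$. Polynomials of minimal support are those whose support is minimal (under inclusion) among supports of nonzero-support polynomials in the ideal. *)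

(* Defs.v *)
From HB Require Import structures.
From mathcomp Require Import all_boot all_order all_algebra.
From mathcomp Require Import finmap.
Set Implicit Arguments. Unset Strict Implicit. Unset Printing Implicit Defensive.
Import Order.TTheory GRing.Theory Num.Theory.
Local Open Scope fset_scope.
Local Open Scope ring_scope.

(* Since B = {oo, 0}, a polynomial  (+)_{u in A} x^u  is determined by *)
(* its support A, a finite subset of Z.  We identify it with A:        *)
(*   tropical sum (+) = min   <->  union of supports,                  *)
(*   tropical product         <->  Minkowski sum of supports,          *)
(*   the zero polynomial oo   <->  the empty set.                      *)
Definition Bpoly := {fset int}.

Definition Bmul (G A : Bpoly) : Bpoly := [fset (g + a)%R | g in G, a in A].

Definition Bideal (I : Bpoly -> Prop) : Prop :=
  [/\ I fset0,
      (forall A B, I A -> I B -> I (A `|` B)) &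
      (forall G A, I A -> I (Bmul G A))].

(* tropical ideal: an ideal satisfying the monomial elimination axiom:
   for f, g in I and u with f_u = g_u = 0, there is h in I with h_u = oo
   and h_v >= min(f_v, g_v) for all v, with equality when f_v <> g_v. *)
Definition tropical_ideal (I : Bpoly -> Prop) : Prop :=
  Bideal I /\
  forall A B (u : int), I A -> I B -> u \in A -> u \in B ->
    exists H, [/\ I H, u \notin H,
                  (forall v, v \in H -> (v \in A) || (v \in B)) &
                  (forall v, v != u -> (v \in A) != (v \in B) -> v \in H)].

Definition minimal_support (I : Bpoly -> Prop) (A : Bpoly) : Prop :=
  [/\ I A, A != fset0 &
      forall B, I B -> B != fset0 -> B `<=` A -> B = A].

Definition circuit4 (A : Bpoly) : Prop :=
  (exists u v : int, u != v /\ (4 %| u - v)%Z /\ A = [fset u; v]) \/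
  (exists u v w : int,
     [/\ ~~ (4 %| u - v)%Z, ~~ (4 %| u - w)%Z, ~~ (4 %| v - w)%Z &
         A = [fset u; v; w]]).

(* Laurent polynomials over a field K: finitely supported maps Z -> K. *)
Definition laurent (K : fieldType) (f : int -> K) : Prop :=
  exists s : seq int, forall u, f u != 0 -> u \in s.

(* an ideal J of K[x^{+-1}]: a set of Laurent polynomials containing 0,
   closed under addition, and closed under multiplication by any Laurent
   polynomial g (the product is computed over a duplicate-free list s
   containing the support of g). *)
Definition Lideal (K : fieldType) (J : (int -> K) -> Prop) : Prop :=
  [/\ (forall f, J f -> laurent f),
      J (fun _ => 0),
      (forall f h, J f -> J h -> J (fun w => f w + h w)) &
      (forall f (g : int -> K) (s : seq int), J f -> uniq s ->
         (forall u, g u != 0 -> u \in s) ->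
         J (fun w => \sum_(u <- s) g u * f (w - u)))].

(* A is the support of F, i.e. A = trop(F) *)
Definition supp_is (K : fieldType) (F : int -> K) (A : Bpoly) : Prop :=
  forall u, (u \in A) = (F u != 0).

(* trop(J): the ideal of B[x^{+-1}] generated by {trop(F) : F in J},
   i.e. the intersection of all ideals containing these. *)
Definition tropJ (K : fieldType) (J : (int -> K) -> Prop) (A : Bpoly) : Prop :=
  forall I' : Bpoly -> Prop, Bideal I' ->
    (forall F A', J F -> supp_is F A' -> I' A') -> I' A.

(* Main.v *)
Require Import Defs.
From HB Require Import structures.
From mathcomp Require Import all_boot all_order all_algebra.
From mathcomp Require Import finmap.
From mathcomp Require Import zify ring.
From Stdlib Require Import Classical FunctionalExtensionality.
Import GRing.Theory.
Set Implicit Arguments. Unset Strict Implicit.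
Local Open Scope ring_scope.
Definition UT (K : fieldType) (J : (int -> K) -> Prop) (A : Bpoly) : Prop :=
  forall x, x \in A -> exists F A' t,
    [/\ J F, supp_is F A', x - t \in A' & forall a, a \in A' -> a + t \in A].

Lemma tropJ_UT (K : fieldType) (J : (int -> K) -> Prop) A : tropJ J A -> UT J A.
Proof.
move=> H; apply: H.
- split.
  + by move=> x; rewrite inE.
  + move=> A1 B1 HA HB x; rewrite inE => /orP [xA|xB].
    * have [F [A' [t [JF sF xt sub]]]] := HA x xA.
      by exists F, A', t; split=> // a aA; rewrite inE sub.
    * have [F [A' [t [JF sF xt sub]]]] := HB x xB.
      by exists F, A', t; split=> // a aA; rewrite inE sub ?orbT.
  + move=> G A1 HA x /imfset2P [g gG [a aA ->]].
    have [F [A' [t [JF sF xt sub]]]] := HA a aA.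
    exists F, A', (t + g); split=> //.
      by rewrite (_ : g + a - (t + g) = a - t) //; ring.
    move=> b bA; rewrite (_ : b + (t + g) = g + (b + t)); last by ring.
    by apply/imfset2P; exists g => //; exists (b + t) => //; apply: sub.
- move=> F A' JF sF x xA; exists F, A', 0; split; rewrite ?subr0 //.
  by move=> a; rewrite addr0.
Qed.
Lemma Jshift (K : fieldType) (J : (int -> K) -> Prop) F (c : K) (t : int) :
  Lideal J -> J F -> J (fun w => c * F (w - t)).
Proof.
case=> _ _ _ Hm JF.
have := Hm F (fun v => if v == t then c else 0) [:: t] JF erefl.
have -> : (fun w => \sum_(u <- [:: t]) (if u == t then c else 0) * F (w - u))
   = (fun w => c * F (w - t)).
  by apply: functional_extensionality => w; rewrite big_seq1 eqxx.
apply; move=> u; rewrite mem_seq1; case: (u == t) => //=; by rewrite eqxx.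
Qed.

Lemma get_poly (I : Bpoly -> Prop) (K : fieldType) (J : (int -> K) -> Prop) A :
  Bideal I -> Lideal J -> (forall A, I A <-> tropJ J A) -> minimal_support I A ->
  exists F, J F /\ supp_is F A.
Proof.
move=> BI LJ IJ [IA A0 minA].
have [x xA] := fset0Pn _ A0.
have [F [A' [t [JF sF xt sub]]]] := tropJ_UT (proj1 (IJ A) IA) xA.
pose B := Bmul [fset t]%fset A'.
have IA' : I A' by apply/IJ => I' _ H; exact: H F A' JF sF.
have IB : I B by case: BI => _ _ H; exact: H.
have memB u : (u \in B) = (u - t \in A').
  apply/imfset2P/idP => [[g] | H].
    by rewrite inE => /eqP -> [a aA ->]; rewrite (_ : t + a - t = a) //; ring.
  by exists t; rewrite ?inE //; exists (u - t) => //; ring.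
have BA : (B `<=` A)%fset.
  apply/fsubsetP => u; rewrite memB => /sub; by rewrite (_ : u - t + t = u) //; ring.
have B0 : B != fset0 by apply/fset0Pn; exists x; rewrite memB.
have eB := minA B IB B0 BA.
exists (fun w => 1 * F (w - t)); split; first exact: (Jshift 1 t LJ JF).
by move=> u; rewrite mul1r -sF -eB memB.
Qed.
Lemma exists_min (I : Bpoly -> Prop) (A : Bpoly) : I A -> A != fset0 ->
  exists B, minimal_support I B /\ (B `<=` A)%fset.
Proof.
move: (leqnn #|`A|%fset); move: {2}#|`A|%fset => n.
elim: n A => [|n IH] A.
  by rewrite leqn0 cardfs_eq0 => /eqP -> _; rewrite eqxx.
move=> Hn IA A0.
case: (classic (minimal_support I A)) => [m|nm].
  by exists A; split=> //; apply: fsubset_refl.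
have [B [IB B0 BA BnA]] : exists B, [/\ I B, B != fset0, (B `<=` A)%fset & B <> A].
  apply: NNPP => H; apply: nm; split=> // B IB B0 BA.
  apply: NNPP => BnA; apply: H; by exists B.
have : (#|`B| < #|`A|)%N.
  apply: fproper_ltn_card; rewrite fproperEneq BA andbT; by apply/eqP.
move=> lt; have Bn : (#|`B| <= n)%N by rewrite -ltnS (leq_trans lt Hn).
have [C [mC CB]] := IH B Bn IB B0.
by exists C; split=> //; apply: fsubset_trans BA.
Qed.
Lemma no_circ01 (B : Bpoly) : (B `<=` [fset (0:int); 1])%fset -> ~ circuit4 B.
Proof.
move=> /fsubsetP sub [[u [v [uv [d E]]]] | [u [v [w [duv duw dvw E]]]]].
- have hu := sub u; have hv := sub v; rewrite E !inE !eqxx ?orbT /= in hu hv.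
  move: uv d; case/orP: (hu isT) => /eqP ->; case/orP: (hv isT) => /eqP -> //.
- have hu := sub u; have hv := sub v; have hw := sub w.
  rewrite E !inE !eqxx ?orbT /= in hu hv hw.
  move: duv duw dvw; case/orP: (hu isT) => /eqP ->; case/orP: (hv isT) => /eqP ->;
  case/orP: (hw isT) => /eqP -> //.
Qed.

Theorem mainTheorem11 (I : Bpoly -> Prop) :
  tropical_ideal I ->
  (forall A, minimal_support I A <-> circuit4 A) ->
  ~ exists (K : fieldType) (J : (int -> K) -> Prop),
      (2%N \in [pchar K]) /\ Lideal J /\ (forall A, I A <-> tropJ J A).
Proof.
move=> [BI _] Hmin [K [J [c2 [LJ IJ]]]].
have m012 : minimal_support I [fset (0:int); 1; 2]%fset.
  by apply/Hmin; right; exists 0, 1, 2; split.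
have m04 : minimal_support I [fset (0:int); 4]%fset.
  by apply/Hmin; left; exists 0, 4; split.
have [F [JF sF]] := get_poly BI LJ IJ m012.
have [H [JH sH]] := get_poly BI LJ IJ m04.
have F0 u : u != 0 -> u != 1 -> u != 2 -> F u = 0.
  move=> a b c; apply/eqP; rewrite -[_ == 0]negbK -sF !inE.
  by rewrite (negbTE a) (negbTE b) (negbTE c).
have H0 u : u != 0 -> u != 4 -> H u = 0.
  move=> a b; apply/eqP; rewrite -[_ == 0]negbK -sH !inE.
  by rewrite (negbTE a) (negbTE b).
have b2 : F 2 != 0 by rewrite -sF !inE.
have b1 : F 1 != 0 by rewrite -sF !inE.
have h4 : H 4 != 0 by rewrite -sH !inE.
set x0 := F 0; set x1 := F 1; set x2 := F 2; set y4 := H 4.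
pose al := - (y4 / x2).
pose be := y4 * x1 / x2 ^+ 2.
pose ga := y4 * x0 / x2 ^+ 2 - y4 * x1 ^+ 2 / x2 ^+ 3.
have JP : J (fun w => H w + al * F (w - 2) + be * F (w - 1) + ga * F (w - 0)).
  case: (LJ) => _ _ Hadd _.
  exact: (Hadd _ _ (Hadd _ _ (Hadd _ _ JH (Jshift al 2 LJ JF)) (Jshift be 1 LJ JF))
           (Jshift ga 0 LJ JF)).
set P := (fun w => _) in JP.
have Pz u : u != 0 -> u != 1 -> P u = 0.
  move=> n0 n1; rewrite /P.
  have [->|n2] := eqVneq u 2.
    rewrite (_ : (2:int) - 2 = 0); last lia.
    rewrite (_ : (2:int) - 1 = 1); last lia.
    rewrite (_ : (2:int) - 0 = 2); last lia.
    rewrite H0 // add0r -/x0 -/x1 -/x2 /al /be /ga.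
    by field.
  have [->|n3] := eqVneq u 3.
    rewrite (_ : (3:int) - 2 = 1); last lia.
    rewrite (_ : (3:int) - 1 = 2); last lia.
    rewrite (_ : (3:int) - 0 = 3); last lia.
    rewrite H0 // (F0 3) // add0r mulr0 addr0 -/x1 -/x2 /al /be.
    by field.
  have [->|n4] := eqVneq u 4.
    rewrite (_ : (4:int) - 2 = 2); last lia.
    rewrite (_ : (4:int) - 1 = 3); last lia.
    rewrite (_ : (4:int) - 0 = 4); last lia.
    rewrite (F0 3) // (F0 4) // !mulr0 !addr0 -/x2 -/y4 /al.
    by field.
  rewrite H0 // !F0 ?mulr0 ?addr0 //; lia.
have P1 : P 1 != 0.
  rewrite /P H0 // (F0 (1 - 2)); try lia.
  rewrite (_ : (1:int) - 1 = 0); last lia.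
  rewrite (_ : (1:int) - 0 = 1); last lia.
  rewrite mulr0 addr0 add0r -/x0 -/x1 /be /ga.
  have -> : y4 * x1 / x2 ^+ 2 * x0 + (y4 * x0 / x2 ^+ 2 - y4 * x1 ^+ 2 / x2 ^+ 3) * x1
     = -(y4 * x1 ^+ 3 / x2 ^+ 3) + 2%:R * (y4 * x0 * x1 / x2 ^+ 2) by field.
  rewrite (pcharf0 c2) mul0r addr0 oppr_eq0 !mulf_neq0 ?invr_eq0 ?expf_neq0 //.
pose A' := [fset u in [fset (0:int); 1]%fset | P u != 0]%fset.
have sP : supp_is P A'.
  move=> u; rewrite !inE.
  have [u01|nu] := boolP ((u == 0) || (u == 1)); first by [].
  by rewrite negb_or in nu; case/andP: nu => n0 n1; rewrite Pz // eqxx.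
have IA' : I A' by apply/IJ => I' _ Hs; exact: Hs P A' JP sP.
have A'0 : A' != fset0 by apply/fset0Pn; exists 1; rewrite sP.
have sub : (A' `<=` [fset (0:int); 1])%fset.
  by apply/fsubsetP => u; rewrite !inE => /andP [].
have [B [mB BA]] := exists_min IA' A'0.
by apply: (no_circ01 (fsubset_trans BA sub)); apply/Hmin.
Qed.
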